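(* For all $a,b\ge0$, $$\left|(a+1)e^{-a}-(b+1)e^{-b}\right|\ge|a-b|\sqrt{ab}\,e^{-\frac{a+b}{2}}.$$ *)

(* Defs.v *)
From Stdlib Require Import Reals.

(* Main.v *)
Require Import Defs.
From Stdlib Require Import Reals Lra Psatz.
From Coquelicot Require Import Coquelicot.
Open Scope R_scope.

Definition FF (m d : R) : R :=
  (m - d + 1) * exp (- (m - d)) - (m + d + 1) * exp (- (m + d))
  - 2 * d * sqrt (m * m - d * d) * exp (- m).

Definition FF' (m d : R) : R :=
  (m - d) * exp (- (m - d)) + (m + d) * exp (- (m + d))
  - 2 * exp (- m) * (sqrt (m * m - d * d) - d * d / sqrt (m * m - d * d)).

Lemma FF_deriv m d : 0 <= d < m -> derivable_pt_lim (FF m) d (FF' m d).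
Proof.
  intros [H1 H2]. apply is_derive_Reals. unfold FF, FF'.
  assert (Hp : 0 < m * m - d * d) by nra.
  auto_derive.
  - lra.
  - assert (Hs : 0 < sqrt (m * m - d * d)) by (apply sqrt_lt_R0; lra).
    replace (m + - d) with (m - d) by ring.
    replace (m * m + - (d * d)) with (m * m - d * d) by ring.
    field. lra.
Qed.

Lemma FF'_nonneg m d : 0 <= d < m -> 0 <= FF' m d.
Proof.
  intros [H1 H2]. unfold FF'.
  assert (Hp : 0 < m * m - d * d) by nra.
  set (S := sqrt (m * m - d * d)).
  assert (Hs : 0 < S) by (apply sqrt_lt_R0; lra).
  assert (HS2 : S * S = m * m - d * d) by (apply sqrt_sqrt; lra).
  set (A := (m - d) * exp (- (m - d))).
  set (B := (m + d) * exp (- (m + d))).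
  set (E := exp (- m)).
  assert (HE : 0 < E) by apply exp_pos.
  assert (HA : 0 <= A) by (unfold A; pose proof (exp_pos (-(m-d))); nra).
  assert (HB : 0 <= B) by (unfold B; pose proof (exp_pos (-(m+d))); nra).
  assert (HAB : A * B = (S * E) * (S * E)).
  { unfold A, B, E. rewrite <- Rmult_assoc.
    replace ((m - d) * exp (- (m - d)) * (m + d) * exp (- (m + d)))
      with ((m*m - d*d) * (exp (- (m - d)) * exp (- (m + d)))) by ring.
    rewrite <- exp_plus, <- HS2.
    replace (- (m - d) + - (m + d)) with (- m + - m) by ring.
    rewrite exp_plus. ring. }
  assert (Hsum : 2 * (S * E) <= A + B).
  { destruct (Rle_lt_dec (2 * (S * E)) (A + B)) as [h|h]; [exact h|].
    exfalso. assert (0 < S * E) by (apply Rmult_lt_0_compat; lra).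
    assert ((A+B)*(A+B) < (2*(S*E))*(2*(S*E))) by (apply Rmult_le_0_lt_compat; lra).
    assert (0 <= (A-B)*(A-B)) by apply Rle_0_sqr. nra. }
  assert (Hq : 0 <= d * d / S) by (unfold Rdiv; apply Rmult_le_pos; [nra | left; apply Rinv_0_lt_compat; lra]).
  nra.
Qed.

Lemma FF0 m : 0 <= m -> FF m 0 = 0.
Proof. intros. unfold FF. replace (m - 0) with (m + 0) by ring. ring. Qed.

Lemma key a b : 0 < a -> a < b ->
  (b + 1) * exp (- b) + (b - a) * sqrt (a * b) * exp (- ((a + b) / 2))
  <= (a + 1) * exp (- a).
Proof.
  intros Ha Hab.
  set (m := (a + b) / 2). set (d := (b - a) / 2).
  destruct (MVT_cor2 (FF m) (FF' m) 0 d) as [c [Hc1 Hc2]].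
  - unfold d; lra.
  - intros c Hc. apply FF_deriv. unfold m, d in *; lra.
  - rewrite FF0 in Hc1 by (unfold m; lra).
    assert (0 <= FF' m c) by (apply FF'_nonneg; unfold m, d in *; lra).
    assert (0 <= FF m d) by (assert (0 <= FF' m c * (d - 0)) by (apply Rmult_le_pos; lra); lra).
    unfold FF in *.
    replace (m - d) with a in * by (unfold m, d; field).
    replace (m + d) with b in * by (unfold m, d; field).
    replace (m * m - d * d) with (a * b) in * by (unfold m, d; field).
    replace (2 * d) with (b - a) in * by (unfold d; field).
    lra.
Qed.

Lemma sym a b : 0 <= a -> a <= b ->
  Rabs ((a + 1) * exp (- a) - (b + 1) * exp (- b))
  >= Rabs (a - b) * sqrt (a * b) * exp (- ((a + b) / 2)).
Proof.
  intros Ha Hab.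
  destruct (Req_dec a 0) as [H0|H0].
  { subst a. rewrite Rmult_0_l, sqrt_0. apply Rle_ge.
    rewrite Rmult_0_r, Rmult_0_l. apply Rabs_pos. }
  destruct (Req_dec a b) as [H1|H1].
  { subst b. apply Rle_ge. replace (a - a) with 0 by ring.
    rewrite Rabs_R0, !Rmult_0_l. apply Rabs_pos. }
  pose proof (key a b ltac:(lra) ltac:(lra)).
  rewrite (Rabs_left1 (a - b)) by lra.
  pose proof (sqrt_pos (a*b)). pose proof (exp_pos (- ((a + b) / 2))).
  assert (0 <= (b - a) * sqrt (a * b) * exp (- ((a + b) / 2))).
  { apply Rmult_le_pos; [apply Rmult_le_pos|]; lra. }
  rewrite Rabs_right by lra. lra.
Qed.

Theorem mainTheorem10 (a b : R) (ha : 0 <= a) (hb : 0 <= b) :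
  Rabs ((a + 1) * exp (- a) - (b + 1) * exp (- b))
  >= Rabs (a - b) * sqrt (a * b) * exp (- ((a + b) / 2)).
Proof.
  destruct (Rle_dec a b) as [h|h].
  - now apply sym.
  - rewrite Rabs_minus_sym, (Rabs_minus_sym a b), (Rmult_comm a b), (Rplus_comm a b).
    apply sym; lra.
Qed.
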